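(* Let $X$ be a minimally $(d + 1)$-rigid normal pseudomanifold of dimension $d \geq 3$. Then every clique of size at most $d$ in the edge graph of $X$ is a face of $X$.
   Context: A simplicial complex is a finite set of finite sets closed under taking subsets; an element of size $i+1$ is an $i$-face (the empty set is the unique $(-1)$-face); 1-faces are edges; $V(X)$ is the vertex set. The edge graph of $X$ is the graph on $V(X)$ whose edges are the 1-faces of $X$; a clique is a set of pairwise adjacent vertices. A pure $d$-dimensional complex has all maximal faces (facets) of dimension $d$. The link of a face $\alpha$ is $\mathrm{lk}_X(\alpha)=\{\beta\in X:\beta\cap\alpha=\emptyset,\ \alpha\cup\beta\in X\}$. A $d$-dimensional normal pseudomanifold ($d\ge1$) is a pure $d$-dimensional simplicial complex in which every $(d-1)$-face lies in exactly two facets and the link of every face of dimension $\le d-2$ (including the empty face) is connected. For a positive integer $q$, a $d$-dimensional simplicial complex $X$ is $q$-rigid if $X$ is connected and for every $A\subseteq V(X)$ disjoint from at least one $d$-face of $X$, the number of edges of $X$ meeting $A$ is at least $q\cdot\#(A)$. An $n$-vertex $d$-dimensional complex is minimally $q$-rigid if it is $q$-rigid and has exactly $(n-d-1)q+\binom{d+1}{2}$ edges. *)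

(* Defs.v *)
From mathcomp Require Import all_boot.
Set Implicit Arguments. Unset Strict Implicit. Unset Printing Implicit Defensive.

Section Complexes.
Variable T : finType.

Definition is_complex (X : {set {set T}}) : Prop :=
  forall s t : {set T}, s \in X -> t \subset s -> t \in X.

Definition verts (X : {set {set T}}) : {set T} := \bigcup_(s in X) s.

Definition is_dim (X : {set {set T}}) (d : nat) : Prop :=
  is_complex X /\ (exists s, (s \in X) /\ #|s| = d.+1) /\
  (forall s, s \in X -> #|s| <= d.+1).

Definition is_pure (X : {set {set T}}) (d : nat) : Prop :=
  is_dim X d /\
  forall s, s \in X -> (forall t, t \in X -> s \subset t -> t = s) -> #|s| = d.+1.

Definition link (X : {set {set T}}) (a : {set T}) : {set {set T}} :=
  [set b in X | [disjoint b & a] && ((a :|: b) \in X)].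

Definition adj (X : {set {set T}}) : rel T :=
  fun u v => (u != v) && ([set u; v] \in X).

Definition connected_cx (X : {set {set T}}) : Prop :=
  forall u v, u \in verts X -> v \in verts X -> connect (adj X) u v.

Definition normal_pseudomanifold (X : {set {set T}}) (d : nat) : Prop :=
  1 <= d /\ is_pure X d /\
  (forall s, s \in X -> #|s| = d ->
     #|[set t in X | (#|t| == d.+1) && (s \subset t)]| = 2) /\
  (forall a, a \in X -> #|a| <= d.-1 -> connected_cx (link X a)).

Definition edges_meeting (X : {set {set T}}) (A : {set T}) : nat :=
  #|[set e in X | (#|e| == 2) && ~~ [disjoint e & A]]|.

Definition num_edges (X : {set {set T}}) : nat :=
  #|[set e in X | #|e| == 2]|.

Definition q_rigid (q : nat) (X : {set {set T}}) (d : nat) : Prop :=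
  is_dim X d /\ connected_cx X /\
  forall A : {set T}, A \subset verts X ->
    (exists f, [/\ f \in X, #|f| = d.+1 & [disjoint f & A]]) ->
    q * #|A| <= edges_meeting X A.

(* minimally q-rigid: q-rigid with exactly (n-d-1)q + C(d+1,2) edges
   (n >= d+1 since X has a d-face, so the subtraction is exact) *)
Definition min_q_rigid (q : nat) (X : {set {set T}}) (d : nat) : Prop :=
  q_rigid q X d /\ num_edges X = (#|verts X| - d.+1) * q + 'C(d.+1, 2).

Definition is_clique (X : {set {set T}}) (C : {set T}) : Prop :=
  C \subset verts X /\
  forall u v, u \in C -> v \in C -> u != v -> [set u; v] \in X.

End Complexes.

(* Main.v *)
Require Import Defs.
From mathcomp Require Import all_boot zify.
Set Implicit Arguments. Unset Strict Implicit. Unset Printing Implicit Defensive.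

Section Main.
Variable T : finType.
Implicit Types (X L : {set {set T}}) (A B W : {set T}).

Lemma meetP (e A : {set T}) :
  reflect (exists2 x, x \in e & x \in A) (~~ [disjoint e & A]).
Proof.
rewrite -setI_eq0; apply: (iffP (set0Pn _)).
  by case=> x; rewrite inE => /andP[]; exists x.
by case=> x xe xA; exists x; rewrite inE xe.
Qed.

Lemma cardsU_disj (U : finType) (A B : {set U}) : [disjoint A & B] -> #|A :|: B| = #|A| + #|B|.
Proof. by move=> dAB; rewrite cardsU (disjoint_setI0 dAB) cards0 subn0. Qed.

Definition meeting (Ed : {set {set T}}) A := [set e in Ed | ~~ [disjoint e & A]].

Definition rigid (q : nat) W (Ed Fc : {set {set T}}) : Prop :=
  [/\ (forall e, e \in Ed -> e \subset W), (forall f, f \in Fc -> f \subset W) &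
   forall A, A \subset W -> (exists2 f, f \in Fc & [disjoint f & A]) ->
     q * #|A| <= #|meeting Ed A| ].

Lemma glue_aux q W1 W2 E1 E2 F1 F2 :
  rigid q W1 E1 F1 -> rigid q W2 E2 F2 ->
  forall f0, f0 \in F1 -> f0 \in F2 ->
  forall A, A \subset W1 :|: W2 -> forall f, f \in F1 -> [disjoint f & A] ->
  q * #|A| <= #|meeting (E1 :|: E2) A|.
Proof.
move=> [E1W F1W r1] [E2W F2W r2] f0 f01 f02 A sA f fF dfA.
have h1 : q * #|A :&: W1| <= #|meeting E1 (A :&: W1)|.
  apply: r1; first exact: subsetIr.
  by exists f => //; apply: disjointWr dfA; apply: subsetIl.
have h2 : q * #|A :\: W1| <= #|meeting E2 (A :\: W1)|.
  apply: r2.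
    apply/subsetP=> x; rewrite inE => /andP[xW1 xA].
    by move/subsetP: sA => /(_ x xA); rewrite inE (negbTE xW1).
  exists f0 => //; rewrite -setI_eq0; apply/eqP/setP=> x; rewrite !inE.
  apply/negP=> /and3P[xf0 xW1 _].
  by move/subsetP: (F1W f0 f01) => /(_ x xf0); rewrite (negbTE xW1).
have dj : [disjoint meeting E1 (A :&: W1) & meeting E2 (A :\: W1)].
  rewrite -setI_eq0; apply/eqP/setP=> e; rewrite /meeting !inE.
  apply/negP=> /andP[/andP[eE1 _] /andP[_ /meetP[x xe]]].
  rewrite inE => /andP[xW1 _].
  by move/subsetP: (E1W e eE1) => /(_ x xe); rewrite (negbTE xW1).
have sub : meeting E1 (A :&: W1) :|: meeting E2 (A :\: W1) \subset meeting (E1 :|: E2) A.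
  apply/subsetP=> e; rewrite /meeting !inE => /orP[] /andP[eE /meetP[x xe]];
   rewrite !inE => H; rewrite eE ?orbT /=; apply/meetP; exists x => //;
   by case/andP: H.
have := subset_leq_card sub; rewrite (cardsU_disj dj).
have := cardsID W1 A; lia.
Qed.

Lemma glue q W1 W2 E1 E2 F1 F2 :
  rigid q W1 E1 F1 -> rigid q W2 E2 F2 ->
  (exists2 f0, f0 \in F1 & f0 \in F2) ->
  rigid q (W1 :|: W2) (E1 :|: E2) (F1 :|: F2).
Proof.
move=> r1 r2 [f0 f01 f02].
have [E1W F1W _] := r1; have [E2W F2W _] := r2.
split.
- move=> e; rewrite inE => /orP[] /[dup] h.
    by move/E1W=> s; apply: subset_trans s (subsetUl _ _).
  by move/E2W=> s; apply: subset_trans s (subsetUr _ _).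
- move=> e; rewrite inE => /orP[] /[dup] h.
    by move/F1W=> s; apply: subset_trans s (subsetUl _ _).
  by move/F2W=> s; apply: subset_trans s (subsetUr _ _).
move=> A sA [f]; rewrite inE => /orP[] fF dfA.
  exact: (glue_aux r1 r2 f01 f02 sA fF dfA).
rewrite setUC; apply: (glue_aux r2 r1 f02 f01 _ fF dfA).
by rewrite setUC.
Qed.

Lemma cone q W Ed Fc v : rigid q W Ed Fc -> v \notin W ->
  rigid q.+1 (v |: W) (Ed :|: [set [set v; w] | w in W]) [set v |: f | f in Fc].
Proof.
move=> [EW FW r] vW; split.
- move=> e; rewrite inE => /orP[/EW s|].
    by apply: subset_trans s (subsetUr _ _).
  case/imsetP=> w wW ->; apply/subsetP=> x; rewrite !inE => /orP[->//|/eqP->].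
  by rewrite wW orbT.
- move=> g /imsetP[f fF ->]; exact: setUS (FW f fF).
move=> A sA [g /imsetP[f fF ->] dgA].
have vA : v \notin A.
  by rewrite (disjointFr dgA) // setU11.
have dfA : [disjoint f & A] by apply: disjointWl dgA; apply: subsetUr.
have sAW : A \subset W.
  apply/subsetP=> x xA; move/subsetP: sA => /(_ x xA).
  by case/setU1P=> [xv|//]; move: vA; rewrite -xv xA.
have h1 := r A sAW (ex_intro2 _ _ f fF dfA).
have inj : injective (fun a => [set v; a]).
  move=> a b /setP H; have := H a; have := H b; rewrite !inE !eqxx !orbT.
  by case/orP=> /eqP -> /esym /orP[] /eqP.
set S2 := [set [set v; a] | a in A].
have cS2 : #|S2| = #|A| by rewrite card_imset.
have dj : [disjoint meeting Ed A & S2].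
  rewrite -setI_eq0; apply/eqP/setP=> e; rewrite !inE.
  apply/negP=> /andP[/andP[eE _] /imsetP[a aA ea]].
  move/subsetP: (EW e eE) => /(_ v); rewrite ea !inE eqxx /= => /(_ isT) vW'.
  by move: vW; rewrite vW'.
have sub : meeting Ed A :|: S2 \subset meeting (Ed :|: [set [set v; w] | w in W]) A.
  apply/subsetP=> e; rewrite /meeting !inE => /orP[/andP[-> ->]//|/imsetP[a aA ->]].
  apply/andP; split.
    by apply/orP; right; apply/imsetP; exists a => //; move/subsetP: sAW; apply.
  by apply/meetP; exists a; rewrite // !inE eqxx orbT.
have := subset_leq_card sub; rewrite cardsU_disj // cS2.
rewrite mulSn; lia.
Qed.


Lemma sub_verts L s : s \in L -> s \subset verts L.
Proof. by move=> sL; apply: (bigcup_sup s). Qed.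

Lemma vertsP L x : is_complex L -> reflect ([set x] \in L) (x \in verts L).
Proof.
move=> cL; apply: (iffP bigcupP).
  by case=> s sL xs; apply: cL sL _; rewrite sub1set.
by move=> h; exists [set x]; rewrite ?set11.
Qed.

Lemma cx_link L a : is_complex L -> is_complex (link L a).
Proof.
move=> cL b t; rewrite !inE => /and3P[bL dba abL] tb.
rewrite (cL _ _ bL tb) /= (disjointWl tb dba) /=.
by apply: cL abL _; apply: setUS.
Qed.

Lemma lkvE L v b : is_complex L ->
  (b \in link L [set v]) = (v \notin b) && (v |: b \in L).
Proof.
move=> cL; rewrite inE disjoint_sym disjoints1.
case: (boolP (v |: b \in L)) => h; last by rewrite !andbF.
by rewrite (cL _ _ h (subsetUr _ _)).
Qed.

Lemma verts_lkv L v u : is_complex L ->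
  (u \in verts (link L [set v])) = (u != v) && ([set v; u] \in L).
Proof.
move=> cL; apply/vertsP/idP; first exact: cx_link.
  by rewrite lkvE // inE eq_sym.
by rewrite lkvE // inE eq_sym.
Qed.

Lemma disjU1r (b a : {set T}) x :
  [disjoint b & x |: a] = (x \notin b) && [disjoint b & a].
Proof.
apply/idP/andP.
  move=> h; split; first by rewrite (disjointFl h) // setU11.
  by apply: disjointWr h; apply: subsetUr.
case=> xb dba; apply/negPn/meetP => -[y yb]; case/setU1P => [yx|ya].
  by move: xb; rewrite -yx yb.
by rewrite (disjointFr dba yb) in ya.
Qed.

Lemma link_link L v a : is_complex L -> a \in link L [set v] ->
  link (link L [set v]) a = link L (v |: a).
Proof.
move=> cL; rewrite lkvE // => /andP[va vaL]; apply/setP=> b.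
rewrite [in LHS]inE !lkvE // [in RHS]inE.
rewrite disjU1r -setUA in_setU negb_or va /=.
case: (boolP (v |: (a :|: b) \in L)) => h; last by rewrite !andbF.
have -> : v |: b \in L by apply: cL h _; apply: setUS; apply: subsetUr.
have -> : b \in L by apply: cL h _; apply: subset_trans (subsetUr _ _); apply: subsetUr.
by case: (v \in b); case: [disjoint b & a].
Qed.

Lemma facet_ext L D s : is_pure L D -> s \in L ->
  exists2 t, t \in L & (#|t| == D.+1) && (s \subset t).
Proof.
move=> [[cL [_ _]] pL] sL.
pose P := [pred t : {set T} | (t \in L) && (s \subset t)].
have P0 : P s by rewrite inE sL subxx.
case: (@arg_maxnP _ s P (fun t : {set T} => #|t|) P0) => t; rewrite inE => /andP[tL st] tmax.
exists t => //; rewrite st andbT; apply/eqP/pL => // t' t'L tt'.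
have := tmax t'; rewrite inE t'L (subset_trans st tt') => /(_ isT) le.
by apply/eqP; rewrite eq_sym eqEcard tt'; exact: le.
Qed.


Lemma lk_face L v b : is_complex L -> b \in link L [set v] -> v |: b \in L.
Proof. by move=> cL; rewrite lkvE // => /andP[]. Qed.

Lemma lk_nv L v b : is_complex L -> b \in link L [set v] -> v \notin b.
Proof. by move=> cL; rewrite lkvE // => /andP[]. Qed.

Lemma lk_of L v t : is_complex L -> t \in L -> v \in t -> t :\ v \in link L [set v].
Proof. by move=> cL tL vt; rewrite lkvE // setD11 setD1K. Qed.

Lemma np_link L D v : normal_pseudomanifold L D.+1 -> 1 <= D -> v \in verts L ->
  normal_pseudomanifold (link L [set v]) D.
Proof.
move=> [_ [pL [ridge lkc]]] D1 vV.
have [[cL [exf dimL]] pur] := pL.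
have cK := @cx_link L [set v] cL.
have v1 : [set v] \in L by apply/vertsP.
split=> //; split; [split; [split=> //; split|] | split].
- have [t tL /andP[/eqP ct vt]] := facet_ext pL v1.
  rewrite sub1set in vt.
  exists (t :\ v); split; first exact: lk_of.
  by move: ct; rewrite (cardsD1 v) vt => -[].
- move=> b bK; have := dimL _ (lk_face cL bK).
  by rewrite cardsU1 (lk_nv cL bK).
- move=> b bK bmax.
  have := pur _ (lk_face cL bK); rewrite cardsU1 (lk_nv cL bK) => h.
  suff : 1 + #|b| = D.+2 by case.
  apply: h => t tL sbt; have vt : v \in t by move/subsetP: sbt; apply; apply: setU11.
  have tK := lk_of cL tL vt.
  have e : t :\ v = b.
    apply: bmax => //; rewrite subsetD1 (lk_nv cL bK) andbT.
    by apply: subset_trans sbt; apply: subsetUr.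
  by rewrite -e setD1K.
- move=> s sK cs.
  have vsL := lk_face cL sK.
  have := ridge _ vsL; rewrite cardsU1 (lk_nv cL sK) cs => /(_ erefl) <-.
  have inj : {in [set t in link L [set v] | (#|t| == D.+1) && (s \subset t)] &,
               injective (fun t => v |: t)}.
    move=> t1 t2 /setIdP[t1K _] /setIdP[t2K _] e.
    by rewrite -(setU1K (lk_nv cL t1K)) e setU1K // (lk_nv cL t2K).
  suff -> : [set t in L | (#|t| == D.+2) && (v |: s \subset t)] =
    (fun t => v |: t) @: [set t in link L [set v] | (#|t| == D.+1) && (s \subset t)].
    by rewrite (card_in_imset inj).
  apply/setP=> t; apply/idP/imsetP; last first.
    case=> t0 /setIdP[t0K /andP[/eqP ct0 st0]] ->.
    apply/setIdP; split; first exact: lk_face.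
    rewrite cardsU1 (lk_nv cL t0K) ct0 eqxx /=.
    exact: setUS.
  move/setIdP => [tL /andP[/eqP ct vst]].
  have vt : v \in t by move/subsetP: vst; apply; apply: setU11.
  exists (t :\ v); last by rewrite setD1K.
  apply/setIdP; split; first exact: lk_of.
  apply/andP; split.
    by have := cardsD1 v t; rewrite vt /=; lia.
  rewrite subsetD1 (lk_nv cL sK) andbT.
  by apply: subset_trans vst; apply: subsetUr.
- move=> a aK ca; rewrite link_link //; apply: lkc; first exact: lk_face.
  rewrite cardsU1 (lk_nv cL aK); lia.
Qed.


Lemma binS2 n : 'C(n.+1, 2) = 'C(n, 2) + n.
Proof. by rewrite binS bin1. Qed.

Definition eIn L B := #|[set e in L | (#|e| == 2) && (e \subset B)]|.

Definition sparse (D : nat) L := forall B, B \subset verts L ->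
  (exists2 f, f \in L & (#|f| == D.+1) && (f \subset B)) ->
  eIn L B + 'C(D.+2, 2) <= D.+1 * #|B|.

Definition tight (D : nat) L := num_edges L + 'C(D.+2, 2) = D.+1 * #|verts L|.

Lemma inj_pair (v : T) : injective (fun a => [set v; a]).
Proof.
move=> a b /setP H; have := H a; have := H b; rewrite !inE !eqxx !orbT.
by case/orP=> /eqP -> /esym /orP[] /eqP.
Qed.

Lemma verts_lk_sub L v B : is_complex L -> v \in verts L ->
  B \subset verts (link L [set v]) -> v |: B \subset verts L.
Proof.
move=> cL vV sB; apply/subsetP=> x /setU1P[->//|xB].
move/subsetP: sB => /(_ x xB); rewrite verts_lkv // => /andP[_ h].
by move/subsetP: (sub_verts h); apply; rewrite !inE eqxx orbT.
Qed.

Lemma star_count L v B : is_complex L -> B \subset verts (link L [set v]) ->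
  eIn L B + #|B| <= eIn L (v |: B).
Proof.
move=> cL sB.
have vB : v \notin B.
  apply/negP=> vB; move/subsetP: sB => /(_ v vB); rewrite verts_lkv //.
  by rewrite eqxx.
set S1 := [set e in L | (#|e| == 2) && (e \subset B)].
set S2 := [set [set v; u] | u in B].
have cS2 : #|S2| = #|B| by rewrite card_imset //; apply: inj_pair.
have dj : [disjoint S1 & S2].
  rewrite -setI_eq0; apply/eqP/setP=> e; rewrite !inE.
  apply/negP=> /andP[/andP[_ /andP[_ eB]] /imsetP[u _ ee]].
  rewrite ee in eB.
  by move/subsetP: eB => /(_ v); rewrite !inE eqxx (negbTE vB) => /(_ isT).
have sub : S1 :|: S2 \subset [set e in L | (#|e| == 2) && (e \subset v |: B)].
  apply/subsetP=> e; rewrite in_setU => /orP[].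
    rewrite !inE => /andP[-> /andP[-> eB]] /=.
    by apply: subset_trans eB (subsetUr _ _).
  case/imsetP=> u uB ->; rewrite !inE.
  move/subsetP: sB => /(_ u uB); rewrite verts_lkv // => /andP[uv ->].
  rewrite cards2 (eq_sym v) uv /=; apply/subsetP=> x; rewrite !inE.
  by case/orP=> /eqP->; rewrite ?eqxx ?uB ?orbT.
have := subset_leq_card sub; rewrite cardsU_disj // cS2.
by [].
Qed.

Lemma sparse_nbr L D v B : sparse D.+1 L -> is_complex L -> v \in verts L ->
  B \subset verts (link L [set v]) ->
  (exists2 f, f \in link L [set v] & (#|f| == D.+1) && (f \subset B)) ->
  eIn L B + 'C(D.+2, 2) <= D.+1 * #|B|.
Proof.
move=> sp cL vV sB [f fK /andP[/eqP cf fB]].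
have vB : v \notin B.
  apply/negP=> vB; move/subsetP: sB => /(_ v vB); rewrite verts_lkv //.
  by rewrite eqxx.
have := sp (v |: B) (verts_lk_sub cL vV sB).
have h : exists2 f, f \in L & (#|f| == D.+2) && (f \subset v |: B).
  exists (v |: f); first exact: lk_face.
  by rewrite cardsU1 (lk_nv cL fK) cf eqxx /=; apply: setUS.
move=> /(_ h); have := star_count cL sB.
rewrite cardsU1 vB (binS2 D.+2); lia.
Qed.

Lemma eIn_lk L v B : is_complex L -> eIn (link L [set v]) B <= eIn L B.
Proof.
move=> cL; apply: subset_leq_card; apply/subsetP=> e /setIdP[eK h].
by apply/setIdP; split=> //; move: eK; rewrite inE => /and3P[].
Qed.

Lemma sparse_link L D v : sparse D.+1 L -> is_complex L -> v \in verts L ->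
  sparse D (link L [set v]).
Proof.
move=> sp cL vV B sB hf; have := sparse_nbr sp cL vV sB hf.
have := eIn_lk v B cL; lia.
Qed.

Lemma num_edges_eIn L : num_edges L = eIn L (verts L).
Proof.
rewrite /num_edges /eIn; apply: eq_card => e; rewrite !inE.
by case: (boolP (e \in L)) => //= eL; rewrite sub_verts // andbT.
Qed.

Lemma lk_edges L D v : sparse D.+1 L -> is_complex L -> v \in verts L ->
  tight D (link L [set v]) ->
  (exists2 f, f \in link L [set v] & #|f| == D.+1) ->
  forall e, e \in L -> #|e| = 2 -> e \subset verts (link L [set v]) ->
  e \in link L [set v].
Proof.
move=> sp cL vV tK [f fK cf] e eL ce eN.
have fN : f \subset verts (link L [set v]) by apply: sub_verts.
have := sparse_nbr sp cL vV (subxx _) (ex_intro2 _ _ f fK (introT andP (conj cf fN))).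
move: tK; rewrite /tight num_edges_eIn => tK.
set N := verts (link L [set v]).
have sub : [set e in link L [set v] | (#|e| == 2) && (e \subset N)] \subset
           [set e in L | (#|e| == 2) && (e \subset N)].
  apply/subsetP=> x /setIdP[xK h]; apply/setIdP; split=> //.
  by move: xK; rewrite inE => /and3P[].
move=> le.
have : [set e in link L [set v] | (#|e| == 2) && (e \subset N)] ==
           [set e in L | (#|e| == 2) && (e \subset N)].
  have tK' : #|[set e in link L [set v] | (#|e| == 2) && (e \subset N)]| +
     'C(D.+2,2) = D.+1 * #|N| := tK.
  rewrite eqEcard sub /=; rewrite /eIn in le.
  by rewrite -(leq_add2r 'C(D.+2,2)) tK'.
move/eqP=> E.
have h : e \in [set e in L | (#|e| == 2) && (e \subset N)] by rewrite inE eL ce eqxx eN.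
by move: h; rewrite -E => /setIdP[].
Qed.


Lemma card_sum (U : finType) (A : {set U}) (P : pred U) :
  #|[set x in A | P x]| = \sum_(x in A) P x.
Proof.
rewrite -sum1_card (eq_bigl (fun x => (x \in A) && P x)); last by move=> x; rewrite /= !inE.
by rewrite big_mkcondr /=; apply: eq_bigr => x _; case: (P x).
Qed.

Lemma adj_sym L : symmetric (adj L).
Proof. by move=> x y; rewrite /adj eq_sym setUC. Qed.

Lemma exit_edge L (S : {set T}) x0 y0 : connected_cx L ->
  x0 \in S -> x0 \in verts L -> y0 \in verts L -> y0 \notin S ->
  exists x y, [/\ x \in S, y \notin S & adj L x y].
Proof.
move=> cc x0S x0V y0V y0S.
case: (boolP [exists x, [exists y, [&& x \in S, y \notin S & adj L x y]]]).
  by case/existsP=> x /existsP[y /and3P[]]; exists x, y.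
move=> /negP nex.
have cl : closed (adj L) S.
  move=> x y axy; apply/idP/idP=> h; apply/negPn/negP=> h'; apply: nex.
    by apply/existsP; exists x; apply/existsP; exists y; rewrite h h' axy.
  by apply/existsP; exists y; apply/existsP; exists x; rewrite h h' adj_sym axy.
have := closed_connect cl (cc _ _ x0V y0V).
by rewrite x0S (negbTE y0S).
Qed.

Lemma adj_verts L x y : adj L x y -> y \in verts L.
Proof.
case/andP=> _ h; apply/bigcupP; exists [set x; y] => //.
by rewrite !inE eqxx orbT.
Qed.

Section Euler.
Variable L : {set {set T}}.
Hypothesis npL : normal_pseudomanifold L 2.

Let cL : is_complex L.
Proof. by case: npL => _ [[[c _] _] _]. Qed.

Let ridge : forall s, s \in L -> #|s| = 2 ->
  #|[set t in L | (#|t| == 3) && (s \subset t)]| = 2.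
Proof. by case: npL => _ [_ [r _]]. Qed.

Let lkc : forall a, a \in L -> #|a| <= 1 -> connected_cx (link L a).
Proof. by case: npL => _ [_ [_ c]]. Qed.

Let exT : exists t, t \in L /\ #|t| = 3.
Proof. by case: npL => _ [[[_ [e _]] _] _]. Qed.

Definition Ed := [set e in L | #|e| == 2].
Definition Tr := [set t in L | #|t| == 3].
Definition tri (e : {set T}) := [set t in L | (#|t| == 3) && (e \subset t)].
Lemma inEd e : (e \in Ed) = (e \in L) && (#|e| == 2). Proof. by rewrite inE. Qed.
Lemma inTr t : (t \in Tr) = (t \in L) && (#|t| == 3). Proof. by rewrite inE. Qed.
Lemma intri e t : (t \in tri e) = (t \in L) && ((#|t| == 3) && (e \subset t)).
Proof. by rewrite inE. Qed.

Lemma L0 : set0 \in L.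
Proof. by case: exT => t [tL _]; apply: cL tL (sub0set _). Qed.

Lemma Lconn : connected_cx L.
Proof.
have := lkc L0; rewrite cards0 => /(_ isT).
suff -> : link L set0 = L by [].
apply/setP=> b; rewrite inE set0U.
by case: (b \in L); rewrite ?andbT //= -setI_eq0 setI0 eqxx.
Qed.

Lemma tri_card e : e \in Ed -> #|tri e| = 2.
Proof. by rewrite inE => /andP[eL /eqP ce]; apply: ridge. Qed.

Lemma triE e : tri e = [set t in Tr | e \subset t].
Proof. by apply/setP=> t; rewrite !inE andbA. Qed.

Lemma Tr_L t : t \in Tr -> t \in L.
Proof. by rewrite inE => /andP[]. Qed.

Lemma Tr_card t : t \in Tr -> #|t| = 3.
Proof. by rewrite inE => /andP[_ /eqP]. Qed.

Lemma edges_in_tri t : t \in Tr -> #|[set e in Ed | e \subset t]| = 3.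
Proof.
move=> tT; have tL := Tr_L tT.
have -> : [set e in Ed | e \subset t] = [set e : {set T} | e \subset t & #|e| == 2].
  apply/setP=> e; rewrite !inE; case: (boolP (e \subset t)) => et; last by rewrite andbF.
  by rewrite (cL tL et) andbT.
by rewrite cards_draws (Tr_card tT).
Qed.

Lemma E1 : 2 * #|Ed| = 3 * #|Tr|.
Proof.
have h1 : \sum_(e in Ed) #|tri e| = 2 * #|Ed|.
  rewrite (eq_bigr (fun _ => 2)); first by rewrite sum_nat_const mulnC.
  by move=> e eE; apply: tri_card.
have h2 : \sum_(t in Tr) #|[set e in Ed | e \subset t]| = 3 * #|Tr|.
  rewrite (eq_bigr (fun _ => 3)); first by rewrite sum_nat_const mulnC.
  by move=> t tT; apply: edges_in_tri.
rewrite -h1 -h2.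
under eq_bigr => e _ do rewrite triE card_sum.
under [RHS]eq_bigr => t _ do rewrite card_sum.
exact: exchange_big.
Qed.

Definition leafy (TE : {set {set T}}) := forall P : {set {set T}}, P \subset TE -> P != set0 ->
  exists x, #|[set e in P | x \in e]| = 1.

Lemma Ed_pair x y : adj L x y -> [set x; y] \in Ed.
Proof. by case/andP=> xy h; rewrite inE h cards2 xy. Qed.

Lemma tree_exists : exists TE : {set {set T}}, [/\ TE \subset Ed, #|TE| + 1 = #|verts L| & leafy TE].
Proof.
have [t0 [t0L ct0]] := exT.
have [v0 v0t] : exists v0, v0 \in t0.
  by apply/set0Pn; apply/negP=> /eqP e; move: ct0; rewrite e cards0.
have v0V : v0 \in verts L by move/subsetP: (sub_verts t0L); apply.
set V := verts L.
suff: forall k (S : {set T}) (TE : {set {set T}}), #|V :\: S| = k -> S \subset V -> v0 \in S -> TE \subset Ed ->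
    (forall e, e \in TE -> e \subset S) -> #|TE| + 1 = #|S| -> leafy TE ->
    exists TE : {set {set T}}, [/\ TE \subset Ed, #|TE| + 1 = #|V| & leafy TE].
  move=> /(_ _ [set v0] set0 erefl); apply; rewrite ?sub1set ?set11 ?sub0set ?cards0 ?cards1 //.
    by move=> e; rewrite inE.
  by move=> P; rewrite subset0 => /eqP ->; rewrite eqxx.
elim=> [|k IH] S TE hk sV v0S sE eS cTE lTE.
  have SV : S = V.
    apply/eqP; rewrite eqEsubset sV /=; apply/subsetP=> z zV.
    apply/negPn/negP=> zS.
    have zVS : z \in V :\: S by rewrite inE zS.
    have : 0 < #|V :\: S| by apply/card_gt0P; exists z.
    by rewrite hk.
  by exists TE; rewrite -SV.
have [y0 y0VS] : exists y0, y0 \in V :\: S.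
  by apply/card_gt0P; rewrite hk.
move: y0VS; rewrite inE => /andP[y0S y0V].
have [x [y [xS yS axy]]] := exit_edge Lconn v0S v0V y0V y0S.
have yV : y \in V := adj_verts axy.
have xyTE : [set x; y] \notin TE.
  apply/negP=> /eS /subsetP /(_ y); rewrite !inE eqxx orbT => /(_ isT).
  by rewrite (negbTE yS).
apply: (IH (y |: S) ([set x; y] |: TE)).
- have E : V :\: (y |: S) = (V :\: S) :\ y.
    by apply/setP=> z; rewrite !inE negb_or andbA.
  have := cardsD1 y (V :\: S); rewrite hk E inE yS yV /= => h; clear -h; lia.
- by apply/subsetP=> z /setU1P[->//|zS]; move/subsetP: sV; apply.
- by rewrite inE v0S orbT.
- by apply/subsetP=> e /setU1P[->|eT]; [apply: Ed_pair|move/subsetP: sE; apply].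
- move=> e /setU1P[->|eT].
    apply/subsetP=> z; rewrite !inE => /orP[] /eqP ->; rewrite ?eqxx ?xS ?orbT //.
  by apply: subset_trans (eS e eT) (subsetUr _ _).
- by rewrite !cardsU1 xyTE yS -cTE.
move=> P sP nP; case: (boolP ([set x; y] \in P)) => xyP.
  exists y; apply/eqP/cards1P; exists [set x; y]; apply/setP=> e.
  rewrite !inE; apply/andP/eqP; last by move=> ->; rewrite xyP !inE eqxx orbT.
  case=> eP ye; move/subsetP: sP => /(_ e eP) /setU1P[//|eT].
  by move/subsetP: (eS e eT) => /(_ y ye); rewrite (negbTE yS).
apply: lTE nP; apply/subsetP=> e eP; move/subsetP: sP => /(_ e eP) /setU1P[eq|//].
by move: xyP; rewrite -eq eP.
Qed.

Lemma tri_pick t v : t \in Tr -> v \in t ->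
  exists u, [/\ u \in t, u != v, [set v; u] \in Ed & t \in tri [set v; u]].
Proof.
move=> tT vt.
have [u] : exists u, u \in t :\ v.
  apply/set0Pn; apply/negP=> /eqP e.
  by have := cardsD1 v t; rewrite vt e cards0 (Tr_card tT).
rewrite !inE => /andP[uv ut].
have sub : [set v; u] \subset t.
  by apply/subsetP=> z; rewrite !inE => /orP[] /eqP ->.
exists u; split=> //.
  by rewrite inEd (cL (Tr_L tT) sub) cards2 (eq_sym v) uv.
by rewrite intri (Tr_L tT) (Tr_card tT) eqxx sub.
Qed.

Definition nb (S : {set {set T}}) := forall e t t', e \in Ed -> t \in tri e ->
  t' \in tri e -> t \in S -> t' \in S.

Lemma tri_Tr e t : t \in tri e -> t \in Tr.
Proof. by rewrite triE inE => /andP[]. Qed.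

Lemma local_all (S : {set {set T}}) (v : T) : S \subset Tr -> nb S -> (exists2 t, t \in S & v \in t) ->
  forall t, t \in Tr -> v \in t -> t \in S.
Proof.
move=> sS nbS [t0 t0S vt0].
have t0T : t0 \in Tr by move/subsetP: sS; apply.
have v1 : [set v] \in L by apply: cL (Tr_L t0T) _; rewrite sub1set.
have cK' : connected_cx (link L [set v]) by apply: lkc; rewrite ?cards1.
set U := [set u | [exists t in S, (u \in t) && (v \in t)]].
have stepU : forall u w, adj (link L [set v]) u w -> u \in U -> w \in U.
  move=> u w /andP[uw]; rewrite lkvE // => /andP[vuw tL].
  rewrite inE => /existsP[t1 /andP[t1S /andP[ut1 vt1]]].
  have t1T : t1 \in Tr by move/subsetP: sS; apply.
  have uv : u != v by apply/negP=> /eqP e; move: vuw; rewrite -e !inE eqxx.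
  have wv : w != v by apply/negP=> /eqP e; move: vuw; rewrite -e !inE eqxx orbT.
  have sub : [set v; u] \subset t1.
    by apply/subsetP=> z; rewrite !inE => /orP[] /eqP ->.
  have eE : [set v; u] \in Ed by rewrite inEd (cL (Tr_L t1T) sub) cards2 (eq_sym v) uv.
  have t1tri : t1 \in tri [set v; u] by rewrite intri (Tr_L t1T) (Tr_card t1T) eqxx sub.
  have ttri : v |: [set u; w] \in tri [set v; u].
    rewrite intri tL cardsU1 vuw cards2 uw /=.
    by apply/subsetP=> z; rewrite !inE => /orP[] /eqP ->; rewrite eqxx ?orbT.
  have := nbS _ _ _ eE t1tri ttri t1S => tS.
  rewrite inE; apply/existsP; exists (v |: [set u; w]).
  by rewrite tS !inE !eqxx !orbT.
have cl : closed (adj (link L [set v])) U.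
  move=> x y axy; apply/idP/idP; first exact: stepU.
  by apply: stepU; rewrite adj_sym.
have [u0 [u0t u0v e0 _]] := tri_pick t0T vt0.
have u0U : u0 \in U by rewrite inE; apply/existsP; exists t0; rewrite t0S u0t vt0.
have inK : forall u t, t \in Tr -> u \in t -> v \in t -> u != v ->
    u \in verts (link L [set v]).
  move=> u t tT ut vt uv; rewrite verts_lkv // uv /=.
  by apply: cL (Tr_L tT) _; apply/subsetP=> z; rewrite !inE => /orP[] /eqP ->.
move=> t tT vt.
have [u [ut uv eE ttri]] := tri_pick tT vt.
have : u \in U.
  by rewrite -(closed_connect cl (cK' _ _ (inK _ _ t0T u0t vt0 u0v) (inK _ _ tT ut vt uv))).
rewrite inE => /existsP[t1 /andP[t1S /andP[ut1 vt1]]].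
have t1T : t1 \in Tr by move/subsetP: sS; apply.
have sub : [set v; u] \subset t1.
  by apply/subsetP=> z; rewrite !inE => /orP[] /eqP ->.
apply: (nbS _ _ _ eE _ ttri t1S).
by rewrite intri (Tr_L t1T) (Tr_card t1T) eqxx sub.
Qed.

Lemma strong (S : {set {set T}}) : S \subset Tr -> S != set0 -> S != Tr ->
  exists e t t', [/\ e \in Ed, t \in tri e, t' \in tri e, t \in S & t' \notin S].
Proof.
move=> sS nS nT.
case: (boolP [exists e, [exists t, [exists t', [&& e \in Ed, t \in tri e, t' \in tri e, t \in S & t' \notin S]]]]).
  by case/existsP=> e /existsP[t /existsP[t' /and5P[h1 h2 h3 h4 h5]]]; exists e, t, t'.
move=> /negP nex.
have nbS : nb S.
  move=> e t t' eE tt t't tS; apply/negPn/negP=> t'S; apply: nex.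
  apply/existsP; exists e; apply/existsP; exists t; apply/existsP; exists t'.
  by rewrite eE tt t't tS t'S.
case/set0Pn: nS => t0 t0S.
have t0T : t0 \in Tr by move/subsetP: sS; apply.
have [x0 x0t0] : exists x0, x0 \in t0.
  by apply/set0Pn; apply/negP=> /eqP e; move: (Tr_card t0T); rewrite e cards0.
set P := [set x | [exists t in S, x \in t]].
have stepP : forall x y, adj L x y -> x \in P -> y \in P.
  move=> x y axy; rewrite !inE => /existsP[t1 /andP[t1S xt1]].
  have eE := Ed_pair axy.
  have [t tt] : exists t, t \in tri [set x; y].
    by apply/set0Pn; rewrite -card_gt0 tri_card.
  have tS : t \in S.
    apply: (local_all sS nbS (ex_intro2 _ _ t1 t1S xt1) (tri_Tr tt)).
    by move: tt; rewrite intri => /andP[_ /andP[_ /subsetP]]; apply; rewrite !inE eqxx.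
  apply/existsP; exists t; rewrite tS /=.
  by move: tt; rewrite intri => /andP[_ /andP[_ /subsetP]]; apply; rewrite !inE eqxx orbT.
have cl : closed (adj L) P.
  move=> x y axy; apply/idP/idP; first exact: stepP.
  by apply: stepP; rewrite adj_sym.
have x0P : x0 \in P by rewrite inE; apply/existsP; exists t0; rewrite t0S.
have x0V : x0 \in verts L by move/subsetP: (sub_verts (Tr_L t0T)); apply.
case/negP: nT; rewrite eqEsubset sS /=; apply/subsetP=> t tT.
have [x xt] : exists x, x \in t.
  by apply/set0Pn; apply/negP=> /eqP e; move: (Tr_card tT); rewrite e cards0.
have xV : x \in verts L by move/subsetP: (sub_verts (Tr_L tT)); apply.
have : x \in P by rewrite -(closed_connect cl (Lconn x0V xV)).
rewrite inE => /existsP[t1 /andP[t1S xt1]].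
exact: (local_all sS nbS (ex_intro2 _ _ t1 t1S xt1) tT xt).
Qed.

Lemma two_sub_x (t : {set T}) x : #|t| = 3 -> x \in t ->
  #|[set e : {set T} | (e \subset t) && (#|e| == 2) && (x \in e)]| = 2.
Proof.
move=> ct xt.
set A := [set e : {set T} | e \subset t & #|e| == 2].
have cA : #|A| = 3 by rewrite cards_draws ct.
have := cardsID [set e : {set T} | x \in e] A.
have -> : A :\: [set e : {set T} | x \in e] = [set e : {set T} | e \subset t :\ x & #|e| == 2].
  apply/setP=> e; rewrite !inE subsetD1.
  by case: (x \in e); case: (e \subset t); rewrite ?andbF.
rewrite cards_draws.
have -> : #|t :\ x| = 2 by have := cardsD1 x t; rewrite xt ct => -[].
have -> : [set e : {set T} | (e \subset t) && (#|e| == 2) && (x \in e)] =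
  A :&: [set e : {set T} | x \in e] by apply/setP=> e; rewrite !inE.
rewrite cA binn => h; clear -h; lia.
Qed.

Lemma parity (S : {set {set T}}) x : S \subset Tr ->
  ~~ odd #|[set e in Ed | (x \in e) && (#|[set t in S | e \subset t]| == 1)]|.
Proof.
move=> sS.
pose f (e : {set T}) := #|[set t in S | e \subset t]|.
set EdX := [set e in Ed | x \in e].
have f2 : forall e, e \in Ed -> f e <= 2.
  move=> e eE; rewrite -(tri_card eE); apply: subset_leq_card.
  apply/subsetP=> t; rewrite !inE => /andP[tS et].
  have := (subsetP sS) t tS; rewrite inTr => /andP[-> ->].
  by rewrite et.
have hsum : \sum_(e in EdX) f e = 2 * \sum_(t in S) (x \in t).
  rewrite /f; under eq_bigr => e _ do rewrite card_sum.
  rewrite exchange_big big_distrr /=; apply: eq_bigr => t tS.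
  rewrite -card_sum.
  have tT : t \in Tr by move/subsetP: sS; apply.
  case: (boolP (x \in t)) => xt.
    rewrite muln1 -(two_sub_x (Tr_card tT) xt); apply: eq_card => e; rewrite !inE.
    case: (boolP (e \subset t)) => et; last by rewrite !andbF.
    by rewrite (cL (Tr_L tT) et) /= andbT; case: (x \in e); case: (#|e| == 2).
  rewrite muln0; apply/eqP; rewrite cards_eq0; apply/eqP/setP=> e; rewrite !inE.
  apply/negP=> /andP[/andP[_ xe] /subsetP et].
  by move: xt; rewrite (et x xe).
have hsplit : \sum_(e in EdX) f e =
    \sum_(e in EdX) (f e == 1) + 2 * \sum_(e in EdX) (f e == 2).
  rewrite big_distrr -big_split; apply: eq_bigr => e; rewrite inE => /andP[eE _].
  by have := f2 e eE; case: (f e) => [|[|[|n]]].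
have -> : #|[set e in Ed | (x \in e) && (f e == 1)]| = \sum_(e in EdX) (f e == 1).
  by rewrite -card_sum; apply: eq_card => e; rewrite !inE andbA.
move: hsum; rewrite hsplit => h.
have -> : \sum_(e in EdX) (f e == 1) =
   2 * (\sum_(t in S) (x \in t) - \sum_(e in EdX) (f e == 2)) by clear -h; lia.
by rewrite oddM.
Qed.

Lemma grow (TE : {set {set T}}) : TE \subset Ed -> leafy TE ->
  #|Tr| <= #|Ed :\: TE| + 1.
Proof.
move=> sTE lTE.
have [t0 [t0L ct0]] := exT.
have t0T : t0 \in Tr by rewrite inTr t0L ct0 eqxx.
suff: forall k (S N : {set {set T}}), #|Tr :\: S| = k -> S \subset Tr -> S != set0 ->
    N \subset Ed :\: TE -> #|N| + 1 = #|S| -> (forall e, e \in N -> tri e \subset S) ->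
    #|Tr| <= #|Ed :\: TE| + 1.
  move=> /(_ _ [set t0] set0 erefl); apply; rewrite ?sub1set ?sub0set ?cards0 ?cards1 //.
    by apply/set0Pn; exists t0; rewrite set11.
  by move=> e; rewrite inE.
elim=> [|k IH] S N hk sS nS sN cN triN.
  have SV : S = Tr.
    apply/eqP; rewrite eqEsubset sS /=; apply/subsetP=> z zV.
    apply/negPn/negP=> zS.
    have zVS : z \in Tr :\: S by rewrite inE zS.
    have : 0 < #|Tr :\: S| by apply/card_gt0P; exists z.
    by rewrite hk.
  by rewrite -SV -cN leq_add2r; apply: subset_leq_card.
have nT : S != Tr.
  apply/negP=> /eqP e; move: hk; rewrite e setDv cards0.
  by [].
have [e [t [t' [eE tt t't tS t'S]]]] := strong sS nS nT.
pose f (e : {set T}) := #|[set t in S | e \subset t]|.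
have Sf : forall e, e \in Ed -> [set t in S | e \subset t] = tri e :&: S.
  move=> e0 _; apply/setP=> z; rewrite !inE.
  case: (boolP (z \in S)) => zS; rewrite ?andbF //= andbT.
  have := (subsetP sS) z zS; rewrite inTr => /andP[-> ->].
  by [].
have fe : f e = 1.
  rewrite /f Sf //; apply/eqP; rewrite eqn_leq; apply/andP; split.
    have : tri e :&: S \subset tri e :\ t'.
      apply/subsetP=> z; rewrite !inE => /andP[zt zS].
      rewrite zt andbT; apply/negP=> /eqP zt'; by move: t'S; rewrite -zt' zS.
    move/subset_leq_card; have := cardsD1 t' (tri e); rewrite t't tri_card //.
    move=> h1 h2; clear -h1 h2; lia.
  by apply/card_gt0P; exists t; rewrite inE tt tS.
set Bd := [set e in Ed | f e == 1].
have [e1 [e1B e1T]] : exists e1, e1 \in Bd /\ e1 \notin TE.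
  case: (boolP [exists e1, (e1 \in Bd) && (e1 \notin TE)]).
    by case/existsP=> e1 /andP[h1 h2]; exists e1.
  move=> /negP nex.
  have sB : Bd \subset TE.
    apply/subsetP=> z zB; apply/negPn/negP=> zT; apply: nex.
    by apply/existsP; exists z; rewrite zB zT.
  have nB : Bd != set0 by apply/set0Pn; exists e; rewrite inE eE fe.
  have [x hx] := lTE Bd sB nB.
  have := parity x sS.
  have -> : [set e in Ed | (x \in e) && (#|[set t in S | e \subset t]| == 1)] =
            [set e in Bd | x \in e].
    by apply/setP=> z; rewrite !inE; case: (x \in z); rewrite ?andbT ?andbF.
  by rewrite hx.
move: e1B; rewrite inE => /andP[e1E /eqP fe1].
have c1 : #|tri e1 :\: S| = 1.
  have := cardsID S (tri e1); rewrite tri_card // -Sf // -/(f e1) fe1.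
  move=> h; clear -h; lia.
have /cards1P[t2 t2E] : #|tri e1 :\: S| == 1 by apply/eqP.
have t2in : t2 \in tri e1 :\: S by rewrite t2E set11.
have t2t : t2 \in tri e1 by move: t2in; rewrite inE => /andP[].
have t2S : t2 \notin S by move: t2in; rewrite inE => /andP[].
have t2T : t2 \in Tr := tri_Tr t2t.
have e1N : e1 \notin N.
  apply/negP=> /triN /subsetP /(_ t2 t2t); by rewrite (negbTE t2S).
apply: (IH (t2 |: S) (e1 |: N)).
- have E : Tr :\: (t2 |: S) = (Tr :\: S) :\ t2.
    by apply/setP=> z; rewrite in_setD1 !in_setD in_setU1 negb_or andbA.
  have := cardsD1 t2 (Tr :\: S); rewrite hk E inE t2S t2T /= => h; clear -h; lia.
- by apply/subsetP=> z /setU1P[->//|zS]; move/subsetP: sS; apply.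
- by apply/set0Pn; exists t2; rewrite setU11.
- apply/subsetP=> z /setU1P[->|zN]; first by rewrite inE e1T e1E.
  by move/subsetP: sN; apply.
- by rewrite !cardsU1 e1N t2S -cN.
move=> z /setU1P[->|zN].
  apply/subsetP=> u ut; rewrite inE; case: (boolP (u \in S)) => uS; rewrite ?orbT //.
  have : u \in tri e1 :\: S by rewrite inE uS ut.
  by rewrite t2E inE => ->.
by apply: subset_trans (triN z zN) (subsetUr _ _).
Qed.

Lemma euler : 3 * #|verts L| <= num_edges L + 6.
Proof.
have [TE [sTE cTE lTE]] := tree_exists.
have := grow sTE lTE; rewrite cardsDS // => h.
have := E1; have : #|TE| <= #|Ed| := subset_leq_card sTE.
rewrite /num_edges -/Ed => h1 h2; clear -h h1 h2 cTE; lia.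
Qed.

End Euler.


Lemma bin2_double m : 'C(m, 2) * 2 = m * m.-1.
Proof.
elim: m => [|m IH]; first by rewrite bin0n.
rewrite binS2 mulnDl IH /=; case: m {IH} => [|m] //=; lia.
Qed.

Lemma edges_split L A :
  num_edges L = #|meeting [set e in L | #|e| == 2] A| + eIn L (verts L :\: A).
Proof.
have h := cardsID [set e : {set T} | [disjoint e & A]] [set e in L | #|e| == 2].
have e1 : #|[set e in L | #|e| == 2] :&: [set e : {set T} | [disjoint e & A]]| =
   eIn L (verts L :\: A).
  apply: eq_card => e; rewrite !inE.
  case: (boolP (e \in L)) => //= eL; case: (#|e| == 2) => //=.
  apply/idP/idP=> h'.
    apply/subsetP=> x xe; rewrite inE (subsetP (sub_verts eL) x xe) andbT.
    by rewrite (disjointFr h' xe).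
  rewrite -setI_eq0; apply/eqP/setP=> x; rewrite !inE.
  apply/negP=> /andP[xe xA]; move/subsetP: h' => /(_ x xe).
  by rewrite inE xA.
have e2 : #|[set e in L | #|e| == 2] :\: [set e : {set T} | [disjoint e & A]]| =
   #|meeting [set e in L | #|e| == 2] A|.
  by apply: eq_card => e; rewrite /meeting !inE andbC.
by rewrite /num_edges -h e1 e2 addnC.
Qed.

Lemma rigid_of_tight K D : is_complex K -> sparse D K -> tight D K ->
  rigid D.+1 (verts K) [set e in K | #|e| == 2] [set f in K | #|f| == D.+1].
Proof.
move=> cK sp tK; split.
- by move=> e; rewrite inE => /andP[eK _]; apply: sub_verts.
- by move=> e; rewrite inE => /andP[eK _]; apply: sub_verts.
move=> A sA [f]; rewrite inE => /andP[fK cf] dfA.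
have sB : verts K :\: A \subset verts K by apply: subsetDl.
have fB : f \subset verts K :\: A.
  apply/subsetP=> x xf; rewrite inE (subsetP (sub_verts fK) x xf) andbT.
  by rewrite (disjointFr dfA xf).
have := sp _ sB (ex_intro2 _ _ f fK (introT andP (conj cf fB))).
have := edges_split K A; move: tK; rewrite /tight.
have := cardsID A (verts K); rewrite (setIidPr sA).
move=> h1 h2 h3 h4; clear -h1 h2 h3 h4; nia.
Qed.

Lemma union_rigid q L (W : T -> {set T}) (E F : T -> {set {set T}}) v0 :
  connected_cx L -> v0 \in verts L ->
  (forall v, v \in verts L -> rigid q (W v) (E v) (F v)) ->
  (forall x y, adj L x y -> exists2 f, f \in F x & f \in F y) ->
  rigid q (\bigcup_(v in verts L) W v) (\bigcup_(v in verts L) E v)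
          (\bigcup_(v in verts L) F v).
Proof.
move=> cc v0V rW adjF.
set V := verts L.
suff: forall k S, #|V :\: S| = k -> S \subset V -> v0 \in S ->
    rigid q (\bigcup_(v in S) W v) (\bigcup_(v in S) E v) (\bigcup_(v in S) F v) ->
    rigid q (\bigcup_(v in V) W v) (\bigcup_(v in V) E v) (\bigcup_(v in V) F v).
  move=> /(_ _ [set v0] erefl); apply; rewrite ?sub1set ?set11 //.
  by rewrite !big_set1; apply: rW.
elim=> [|k IH] S hk sV v0S rS.
  have SV : S = V.
    apply/eqP; rewrite eqEsubset sV /=; apply/subsetP=> z zV.
    apply/negPn/negP=> zS.
    have zVS : z \in V :\: S by rewrite inE zS.
    have : 0 < #|V :\: S| by apply/card_gt0P; exists z.
    by rewrite hk.
  by rewrite -SV.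
have [y0 y0VS] : exists y0, y0 \in V :\: S.
  by apply/card_gt0P; rewrite hk.
move: y0VS; rewrite inE => /andP[y0S y0V].
have [x [y [xS yS axy]]] := exit_edge cc v0S v0V y0V y0S.
have yV : y \in V := adj_verts axy.
apply: (IH (y |: S)).
- have E' : V :\: (y |: S) = (V :\: S) :\ y.
    by apply/setP=> z; rewrite !inE negb_or andbA.
  have := cardsD1 y (V :\: S); rewrite hk E' inE yS yV /= => h; clear -h; lia.
- by apply/subsetP=> z /setU1P[->//|zS]; move/subsetP: sV; apply.
- by rewrite inE v0S orbT.
rewrite !big_setU1 //= [W y :|: _]setUC [E y :|: _]setUC [F y :|: _]setUC.
apply: (glue rS (rW y yV)).
have [f fx fy] := adjF x y axy.
by exists f => //; apply/bigcupP; exists x.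
Qed.


Lemma np_cx L D : normal_pseudomanifold L D -> is_complex L.
Proof. by case=> _ [[[c _] _] _]. Qed.

Lemma np_pure L D : normal_pseudomanifold L D -> is_pure L D.
Proof. by case=> _ [p _]. Qed.

Lemma np_face L D : normal_pseudomanifold L D -> exists2 f, f \in L & #|f| == D.+1.
Proof. by case=> _ [[[_ [[f [fL cf]] _]] _] _]; exists f; rewrite ?cf. Qed.

Lemma np_conn L D : normal_pseudomanifold L D -> connected_cx L.
Proof.
move=> H; have cL := np_cx H; have [f fL _] := np_face H.
case: H => _ [_ [_ lkc]].
have L0 : set0 \in L by apply: cL fL (sub0set _).
have := lkc _ L0; rewrite cards0 => /(_ isT).
suff -> : link L set0 = L by [].
apply/setP=> b; rewrite inE set0U.
by case: (b \in L); rewrite ?andbT //= -setI_eq0 setI0 eqxx.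
Qed.

Lemma face_edges L F : is_complex L -> F \in L -> eIn L F = 'C(#|F|, 2).
Proof.
move=> cL FL; rewrite /eIn -cards_draws; apply: eq_card => e; rewrite !inE.
case: (boolP (e \subset F)) => eF; rewrite ?andbF //= andbT.
by rewrite (cL _ _ FL eF).
Qed.

Lemma main_ind n : forall L, normal_pseudomanifold L n.+2 -> sparse n.+2 L ->
  tight n.+2 L /\ (forall C, is_clique L C -> #|C| <= n.+2 -> C \in L).
Proof.
elim: n => [|n IH] L npL sp.
  have cL := np_cx npL.
  have [f fL cf] := np_face npL.
  have L0 : set0 \in L by apply: cL fL (sub0set _).
  split.
    have := euler npL; have := sp (verts L) (subxx _).
    have h : exists2 f0, f0 \in L & (#|f0| == 3) && (f0 \subset verts L).
      by exists f; rewrite // cf sub_verts.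
    move=> /(_ h); rewrite -num_edges_eIn /tight => h1 h2; clear -h1 h2.
    have e6 : 'C(4, 2) = 6 by [].
    rewrite e6 in h1 *; lia.
  move=> C [sC clC] cC.
  move: cC; rewrite leq_eqVlt => /orP[/cards2P[x [y [xy eC]]]|].
    by rewrite eC; apply: clC; rewrite // eC !inE eqxx ?orbT.
  rewrite ltnS leq_eqVlt => /orP[/cards1P[x eC]|].
    by rewrite eC; apply/vertsP=> //; move/subsetP: sC; apply; rewrite eC set11.
  by rewrite ltnS leqn0 cards_eq0 => /eqP ->.
have cL := np_cx npL.
have pL := np_pure npL.
have cc := np_conn npL.
pose K v := link L [set v].
have npK : forall v, v \in verts L -> normal_pseudomanifold (K v) n.+2.
  by move=> v vV; apply: np_link.
have spK : forall v, v \in verts L -> sparse n.+2 (K v).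
  by move=> v vV; apply: sparse_link.
have IHK : forall v, v \in verts L -> tight n.+2 (K v) /\
    (forall C, is_clique (K v) C -> #|C| <= n.+2 -> C \in K v).
  by move=> v vV; apply: IH; [apply: npK | apply: spK].
have cK : forall v, is_complex (K v) by move=> v; apply: cx_link.
have vK : forall v, v \notin verts (K v) by move=> v; rewrite verts_lkv // eqxx.
split.
  have [F0 F0L /eqP cF0] := np_face npL.
  have [v0 v0F] : exists v0, v0 \in F0.
    by apply/set0Pn; apply/negP=> /eqP e; move: cF0; rewrite e cards0.
  have v0V : v0 \in verts L by move/subsetP: (sub_verts F0L); apply.
  pose W v := v |: verts (K v).
  pose E v := [set e in K v | #|e| == 2] :|: [set [set v; w] | w in verts (K v)].
  pose F v := [set v |: f | f in [set f in K v | #|f| == n.+3]].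
  have rW : forall v, v \in verts L -> rigid n.+4 (W v) (E v) (F v).
    move=> v vV; apply: cone; last exact: vK.
    by apply: rigid_of_tight => //; [apply: spK | case: (IHK v vV)].
  have inF : forall v t, t \in L -> #|t| = n.+4 -> v \in t -> t \in F v.
    move=> v t tL ct vt; apply/imsetP; exists (t :\ v); last by rewrite setD1K.
    rewrite inE lk_of //=; have := cardsD1 v t; rewrite vt ct => h.
    by apply/eqP; clear -h; lia.
  have adjF : forall x y, adj L x y -> exists2 f, f \in F x & f \in F y.
    move=> x y /andP[xy xyL]; have [t tL /andP[/eqP ct st]] := facet_ext pL xyL.
    exists t; apply: inF => //; move/subsetP: st; apply; rewrite !inE eqxx ?orbT //.
  have [EW FW rr] := union_rigid cc v0V rW adjF.
  set Wall := \bigcup_(v in verts L) W v.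
  have WallE : Wall = verts L.
    apply/eqP; rewrite eqEsubset; apply/andP; split.
      apply/bigcupsP=> v vV; exact: verts_lk_sub.
    apply/subsetP=> v vV; apply/bigcupP; exists v => //; exact: setU11.
  set A := verts L :\: F0.
  have F0V : F0 \subset verts L := sub_verts F0L.
  have := rr A; rewrite -/Wall WallE subsetDl => /(_ isT).
  have hF : exists2 f, f \in \bigcup_(v in verts L) F v & [disjoint f & A].
    exists F0; first by apply/bigcupP; exists v0 => //; apply: inF.
    rewrite -setI_eq0; apply/eqP/setP=> x; rewrite !inE.
    by case: (x \in F0); rewrite ?andbF.
  move=> /(_ hF) h1.
  have h2 : #|meeting (\bigcup_(v in verts L) E v) A| <=
            #|meeting [set e in L | #|e| == 2] A|.
    apply: subset_leq_card; apply/subsetP=> e; rewrite /meeting !inE.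
    case/andP=> /bigcupP[v vV]; rewrite inE => /orP[]; last first.
      case/imsetP=> w wK -> ->; rewrite andbT.
      move: wK; rewrite verts_lkv // => /andP[wv ->]; rewrite cards2 (eq_sym v) wv.
      by [].
    move=> /setIdP[eK e2] dA; rewrite e2 dA !andbT.
    by move: eK; rewrite /K inE => /and3P[].
  have h3 := edges_split L A.
  have h4 : verts L :\: A = F0.
    apply/setP=> x; rewrite !inE; case: (boolP (x \in F0)) => xF; rewrite ?andbF ?andbT //=.
      by rewrite (subsetP F0V x xF).
    by rewrite andNb.
  rewrite h4 face_edges // cF0 in h3.
  have h5 : #|A| = #|verts L| - n.+4 by rewrite cardsDS // cF0.
  have h6 : n.+4 <= #|verts L| by rewrite -cF0; apply: subset_leq_card.
  have h7 := sp (verts L) (subxx _).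
  have h8 : exists2 f, f \in L & (#|f| == n.+4) && (f \subset verts L).
    by exists F0; rewrite // cF0 eqxx F0V.
  move: (h7 h8); rewrite -num_edges_eIn => h9.
  have h10 := bin2_double n.+4.
  rewrite /tight (binS2 n.+4).
  rewrite (binS2 n.+4) in h9.
  clear -h1 h2 h3 h5 h6 h9 h10; nia.
move=> C [sC clC] cC.
case: (set_0Vmem C) => [->|[v vC]].
  have [f fL _] := np_face npL; exact: cL fL (sub0set _).
have vV : v \in verts L by move/subsetP: sC; apply.
have [tK clK] := IHK v vV.
have [f0 f0K cf0] := np_face (npK v vV).
have sC' : C :\ v \subset verts (K v).
  apply/subsetP=> u; rewrite !inE => /andP[uv uC]; rewrite verts_lkv // uv /=.
  by apply: clC => //; rewrite eq_sym.
have : C :\ v \in K v.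
  apply: clK; last by have := cardsD1 v C; rewrite vC => h; clear -h cC; lia.
  split=> // u w uC wC uw.
  have uC0 : u \in C by move: uC; rewrite inE => /andP[].
  have wC0 : w \in C by move: wC; rewrite inE => /andP[].
  apply: (lk_edges sp cL vV tK (ex_intro2 _ _ f0 f0K cf0)).
  - exact: clC.
  - by rewrite cards2 uw.
  by apply/subsetP=> z; rewrite !inE => /orP[] /eqP ->; apply: (subsetP sC').
move=> h; have := lk_face cL h; rewrite setD1K //.
Qed.

End Main.

Lemma sparse_of_min (T : finType) (X : {set {set T}}) (d : nat) :
  min_q_rigid d.+1 X d -> sparse d X.
Proof.
move=> [[[cX [[f0 [f0X cf0]] _]] [_ rig]] nE] B sB [f fX /andP[/eqP cf fB]].
set A := verts X :\: B.
have := rig A (subsetDl _ _).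
have hf : exists f1, [/\ f1 \in X, #|f1| = d.+1 & [disjoint f1 & A]].
  exists f; split=> //; rewrite -setI_eq0; apply/eqP/setP=> x; rewrite !inE.
  by case: (boolP (x \in f)) => xf //=; rewrite (subsetP fB x xf).
move=> /(_ hf) h1.
have h2 : edges_meeting X A = #|meeting [set e in X | #|e| == 2] A|.
  by apply: eq_card => e; rewrite /meeting !inE andbA.
have h3 := edges_split X A.
have h4 : verts X :\: A = B.
  apply/setP=> x; rewrite !inE; case: (boolP (x \in B)) => xB; rewrite ?andbT ?andbF //=.
    by rewrite (subsetP sB x xB).
  by rewrite andNb.
rewrite h4 in h3.
have h5 : #|A| = #|verts X| - #|B| by rewrite cardsDS.
have h6 : #|B| <= #|verts X| by apply: subset_leq_card.
have h7 : d.+1 <= #|B| by rewrite -cf; apply: subset_leq_card.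
have h10 := bin2_double d.+1.
rewrite (binS2 d.+1).
rewrite h2 in h1.
clear -h1 h3 h5 h6 h7 h10 nE; nia.
Qed.

Unset Implicit Arguments.

Theorem lemma7p3 (T : finType) (X : {set {set T}}) (d : nat) :
  3 <= d -> normal_pseudomanifold X d -> min_q_rigid d.+1 X d ->
  forall C : {set T}, is_clique X C -> #|C| <= d -> C \in X.
Proof.
move=> d3 npX mX; have spX := sparse_of_min mX.
case: d d3 npX mX spX => [|[|d]] // _ npX _ spX.
by case: (main_ind npX spX).
Qed.
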